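(* Let $\Omega\subseteq\mathbb{R}^d$ be open and work in the ultrapower described in the context with $\rho=\langle R_\varphi\rangle$. Then: (i) for $(f_\varphi)\in\mathcal{E}(\Omega)^{\mathcal{D}_0}$, $(f_\varphi)\in\mathcal{M}(\mathcal{E}(\Omega)^{\mathcal{D}_0})$ if and only if $\langle f_\varphi\rangle\in\mathcal{M}_\rho({}^*\mathcal{E}(\Omega))$; (ii) the map $\widehat{f_\varphi}\mapsto\widehat{\langle f_\varphi\rangle}$ is a well-defined isomorphism of differential algebras from $\widehat{\mathcal{E}(\Omega)^{\mathcal{D}_0}}$ onto ${}^\rho\mathcal{E}(\Omega)$.
   Context: Fix $\mathcal{D}_0=\mathcal{D}(\mathbb{R}^d)$. For $\varphi\in\mathcal{D}_0$ let $R_\varphi=\sup\{\|x\|:\varphi(x)\neq0\}$ if $\varphi\neq0$, $R_0=1$. For $n\in\mathbb{N}$, $\mathcal{D}_n$ is the set of $\varphi\in\mathcal{D}_0$ that are real-valued, even, with $R_\varphi\le1/n$, $\int\varphi=1$, $\int x^\alpha\varphi(x)dx=0$ for $1\le|\alpha|\le n$, $\int|\varphi|\le1+1/n$, and $\sup_x|\partial^\alpha\varphi(x)|\le R_\varphi^{-2(|\alpha|+d)}$ for $|\alpha|\le n$. $\mathcal{U}$ is a fixed free $\mathfrak c^+$-good ultrafilter on $\mathcal{D}_0$ containing every $\mathcal{D}_n$; ''a.e.'' means on a set belonging to $\mathcal U$. Asymptotic functions: $\mathcal{E}(\Omega)=C^\infty(\Omega;\mathbb{C})$; $\mathcal{M}(\mathcal{E}(\Omega)^{\mathcal{D}_0})$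 = nets $(f_\varphi)$ in $\mathcal{E}(\Omega)$ such that for every compact $K\subset\Omega$ and $\alpha\in\mathbb{N}_0^d$ there is $m$ with $\sup_K|\partial^\alpha f_\varphi|\le R_\varphi^{-m}$ a.e.; $\mathcal{N}$ = nets with $\sup_K|\partial^\alpha f_\varphi|\le R_\varphi^{p}$ a.e. for all $K,\alpha,p\in\mathbb{N}$; $\widehat{\mathcal{E}(\Omega)^{\mathcal{D}_0}}=\mathcal{M}/\mathcal{N}$ with pointwise (in $\varphi$) operations and derivatives. Ultrapower (distributional non-standard model): two nets are equivalent if they agree a.e.; ${}^*\mathbb{R}$, ${}^*\mathbb{C}$, ${}^*\mathbb{R}^d$, ${}^*\mathcal{E}(\Omega)$ are the sets of classes $\langle\cdot\rangle$ of nets in $\mathbb{R},\mathbb{C},\mathbb{R}^d,\mathcal{E}(\Omega)$; ${}^*\Omega$ = classes of nets $(x_\varphi)$ with $x_\varphi\in\Omega$ a.e.; for $f=\langle f_\varphi\rangle$ and $\xi=\langle x_\varphi\rangle\in{}^*\Omega$, $f(\xi)=\langle f_\varphi(x_\varphi)\rangle$ and $\partial^\alpha f=\langle\partial^\alpha f_\varphi\rangle$; order and absolute values componentwise a.e.; standard objects embedded by constant nets. $\rho=\langle R_\varphi\rangle$. $\mathcal{M}_\rho({}^*\mathbb{C})=\{\zeta:|\zeta|\le\rho^{-m}\text{ some }m\in\mathbb{N}\}$, $\mathcal{N}_\rho({}^*\mathbb{C})=\{\zeta:|\zeta|<\rho^n\ \forall n\in\mathbb{N}\}$. $\mu(\Omega)=\{x+dx:x\in\Omega,\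 dx\in{}^*\mathbb{R}^d,\ \|dx\|<1/n\ \forall n\in\mathbb{N}\}$. $\mathcal{M}_\rho({}^*\mathcal{E}(\Omega))=\{f\in{}^*\mathcal{E}(\Omega):\partial^\alpha f(x)\in\mathcal{M}_\rho({}^*\mathbb{C})\ \forall\alpha\in\mathbb{N}_0^d,\ \forall x\in\mu(\Omega)\}$, $\mathcal{N}_\rho({}^*\mathcal{E}(\Omega))$ likewise with $\mathcal{N}_\rho({}^*\mathbb{C})$; ${}^\rho\mathcal{E}(\Omega)=\mathcal{M}_\rho({}^*\mathcal{E}(\Omega))/\mathcal{N}_\rho({}^*\mathcal{E}(\Omega))$ with classes $\widehat f$. *)

(* Defs.v *)
From mathcomp Require Import all_boot all_algebra all_classical all_reals all_analysis.
From mathcomp Require Import complex.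
Import GRing.Theory Num.Theory.
Import numFieldNormedType.Exports.
Set Implicit Arguments. Unset Strict Implicit. Unset Printing Implicit Defensive.
Local Open Scope classical_set_scope.
Local Open Scope ring_scope.

Section AsymptoticFunctions.
Variables (R : realType) (d : nat).

Notation Rd := 'rV[R]_d.

Definition enorm (x : Rd) : R := Num.sqrt (\sum_(i < d) (x ord0 i) ^+ 2).

Definition cnorm (z : R[i]) : R := Num.sqrt (complex.Re z ^+ 2 + complex.Im z ^+ 2).

Definition unitv (j : 'I_d) : Rd := \row_(k < d) (k == j)%:R.

(* partial derivative d/dx_j of a complex-valued function (componentwise on
   real and imaginary parts); functions on an open set are represented by
   total functions on R^d, only their values on the open set matter. *)
Definition pd (j : 'I_d) (f : Rd -> R[i]) : Rd -> R[i] :=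
  fun x => Complex ('D_(unitv j) (fun y => complex.Re (f y)) x)
                   ('D_(unitv j) (fun y => complex.Im (f y)) x).

Definition pds (s : seq 'I_d) (f : Rd -> R[i]) : Rd -> R[i] :=
  foldr pd f s.

Definition mindex := 'I_d -> nat.
Definition mlen (a : mindex) : nat := (\sum_(j < d) a j)%N.
Definition pda (a : mindex) (f : Rd -> R[i]) : Rd -> R[i] :=
  foldr (fun j g => iter (a j) (pd j) g) f (enum 'I_d).

Definition smooth_on (O : set Rd) (f : Rd -> R[i]) : Prop :=
  forall (s : seq 'I_d) (x : Rd), O x ->
    {for x, continuous (fun y : Rd => complex.Re (pds s f y))} /\
    {for x, continuous (fun y : Rd => complex.Im (pds s f y))} /\
    forall j : 'I_d,
      derivable (fun y => complex.Re (pds s f y)) x (unitv j) /\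
      derivable (fun y => complex.Im (pds s f y)) x (unitv j).

Definition testfun (phi : Rd -> R[i]) : Prop :=
  smooth_on setT phi /\ compact (closure [set x | phi x != 0]).

Definition D0 : Type := {phi : Rd -> R[i] | testfun phi}.

Definition Rphi (phi : D0) : R :=
  if `[< exists x, sval phi x != 0 >]
  then sup [set enorm x | x in [set x | sval phi x != 0]]
  else 1.

(* Lebesgue integral over R^d of a (continuous, compactly supported) real
   function, written as the iterated one-dimensional Lebesgue integral
   (Fubini) over the coordinates in order *)
Definition setcoord (x : Rd) (j : 'I_d) (t : R) : Rd :=
  \row_(k < d) (if k == j then t else x ord0 k).
Fixpoint iint_from (l : seq 'I_d) (g : Rd -> R) (x : Rd) : R :=
  match l with
  | [::] => g x
  | j :: l' => Rintegral (@lebesgue_measure R) setT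
                 (fun t => iint_from l' g (setcoord x j t))
  end.
Definition integral_Rd (g : Rd -> R) : R := iint_from (enum 'I_d) g 0.

Definition xpow (a : mindex) (x : Rd) : R := \prod_(j < d) (x ord0 j) ^+ (a j).

Definition Dn (n : nat) : set D0 := fun phi =>
  let f := sval phi in
  (forall x, complex.Im (f x) = 0) /\
  (forall x, f (- x) = f x) /\
  Rphi phi <= n%:R^-1 /\
  integral_Rd (fun x => complex.Re (f x)) = 1 /\
  (forall a : mindex, (1 <= mlen a <= n)%N ->
     integral_Rd (fun x => xpow a x * complex.Re (f x)) = 0) /\
  integral_Rd (fun x => `|complex.Re (f x)|) <= 1 + n%:R^-1 /\
  (forall a : mindex, (mlen a <= n)%N ->
     forall x, cnorm (pda a f x) <= Rphi phi ^- (2 * (mlen a + d))).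

End AsymptoticFunctions.

Definition ultrafilter_on (I : Type) (U : set (set I)) : Prop :=
  U setT /\ ~ U set0 /\
  (forall A B, U A -> U B -> U (A `&` B)) /\
  (forall A B, A `<=` B -> U A -> U B) /\
  (forall A, U A \/ U (~` A)).

Definition free_filter (I : Type) (U : set (set I)) : Prop :=
  forall i : I, exists A, U A /\ ~ A i.

(* c^+-good (Keisler): for every index set L of cardinality <= c (i.e.
   injecting into R) every anti-monotone map from finite subsets of L to U
   has a multiplicative refinement in U *)
Definition cplus_good (R : realType) (I : Type) (U : set (set I)) : Prop :=
  forall (L : Type) (inj : L -> R), injective inj ->
  forall f : set L -> set I,
    (forall s, finite_set s -> U (f s)) ->
    (forall s t, finite_set s -> finite_set t -> s `<=` t -> f t `<=` f s) ->
    exists g : set L -> set I,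
      (forall s, finite_set s -> U (g s) /\ g s `<=` f s) /\
      (forall s t, finite_set s -> finite_set t -> g (s `|` t) = g s `&` g t).

Section Ultrapower.
Variables (R : realType) (d : nat) (U : set (set (D0 R d))).
Notation Rd := 'rV[R]_d.
Notation D0 := (D0 R d).

Definition ae (P : D0 -> Prop) : Prop := U [set phi | P phi].

Definition net := D0 -> Rd -> R[i].
Definition net_in_E (O : set Rd) (f : net) : Prop :=
  forall phi, smooth_on O (f phi).

Definition moderate (O : set Rd) (f : net) : Prop :=
  forall K : set Rd, compact K -> K `<=` O -> forall a : mindex d,
  exists m : nat, (0 < m)%N /\
    ae (fun phi => forall x, K x -> cnorm (pda a (f phi) x) <= Rphi phi ^- m).

Definition negligible (O : set Rd) (f : net) : Prop :=
  forall K : set Rd, compact K -> K `<=` O -> forall a : mindex d,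
  forall p : nat, (0 < p)%N ->
    ae (fun phi => forall x, K x -> cnorm (pda a (f phi) x) <= Rphi phi ^+ p).

Definition net_add (f g : net) : net := fun phi x => f phi x + g phi x.
Definition net_sub (f g : net) : net := fun phi x => f phi x - g phi x.
Definition net_mul (f g : net) : net := fun phi x => f phi x * g phi x.
Definition net_scale (c : R[i]) (f : net) : net := fun phi x => c * f phi x.
Definition net_one : net := fun phi x => 1.
Definition net_pd (j : 'I_d) (f : net) : net := fun phi => pd j (f phi).

(* Ultrapower.  An element of *X is the class <x_phi> of a net (x_phi); all
   operations/predicates below are defined on representatives, componentwise
   and a.e., as in the context.  *)
(* <f_phi> as an element of *E(Omega) is represented by the net itself *)
Definition up (f : net) : D0 -> Rd -> R[i] := f.
Definition up_add (F G : D0 -> Rd -> R[i]) := fun phi x => F phi x + G phi x.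
Definition up_sub (F G : D0 -> Rd -> R[i]) := fun phi x => F phi x - G phi x.
Definition up_mul (F G : D0 -> Rd -> R[i]) := fun phi x => F phi x * G phi x.
Definition up_scale (c : R[i]) (F : D0 -> Rd -> R[i]) := fun phi x => c * F phi x.
Definition up_one : D0 -> Rd -> R[i] := fun phi x => 1.
Definition up_pd (j : 'I_d) (F : D0 -> Rd -> R[i]) := fun phi => pd j (F phi).
Definition up_pda (a : mindex d) (F : D0 -> Rd -> R[i]) := fun phi => pda a (F phi).
Definition up_eval (F : D0 -> Rd -> R[i]) (xi : D0 -> Rd) : D0 -> R[i] :=
  fun phi => F phi (xi phi).

Definition infinitesimal (dx : D0 -> Rd) : Prop :=
  forall n : nat, ae (fun phi => enorm (dx phi) < (n.+1)%:R^-1).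
Definition in_mu (O : set Rd) (xi : D0 -> Rd) : Prop :=
  exists x dx, O x /\ infinitesimal dx /\ ae (fun phi => xi phi = x + dx phi).

Definition Mrho_C (z : D0 -> R[i]) : Prop :=
  exists m : nat, (0 < m)%N /\ ae (fun phi => cnorm (z phi) <= Rphi phi ^- m).
Definition Nrho_C (z : D0 -> R[i]) : Prop :=
  forall n : nat, (0 < n)%N -> ae (fun phi => cnorm (z phi) < Rphi phi ^+ n).

Definition Mrho_E (O : set Rd) (F : D0 -> Rd -> R[i]) : Prop :=
  forall (a : mindex d) (xi : D0 -> Rd), in_mu O xi -> Mrho_C (up_eval (up_pda a F) xi).
Definition Nrho_E (O : set Rd) (F : D0 -> Rd -> R[i]) : Prop :=
  forall (a : mindex d) (xi : D0 -> Rd), in_mu O xi -> Nrho_C (up_eval (up_pda a F) xi).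

(* equality in the quotients:
   hat f = hat g in E^(Omega)^{D0}   iff f - g in N,
   hat F = hat G in ^rho E(Omega)     iff F - G in N_rho( *E(Omega) ) *)
Definition hat_eq (O : set Rd) (f g : net) : Prop := negligible O (net_sub f g).
Definition rhohat_eq (O : set Rd) (F G : D0 -> Rd -> R[i]) : Prop :=
  Nrho_E O (up_sub F G).

End Ultrapower.

(* Main.v *)
Require Import Defs.
From mathcomp Require Import all_boot all_algebra all_classical all_reals all_analysis.
From mathcomp Require Import complex.
From mathcomp Require Import ring lra.
Import GRing.Theory Num.Theory.
Import order.Order.TTheory.
Import numFieldNormedType.Exports.
Local Open Scope classical_set_scope.
Local Open Scope ring_scope.

Lemma pda0 (R : realType) d (f : 'rV[R]_d -> R[i]) : pda (fun _ => 0%N) f = f.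
Proof. by rewrite /pda; elim: (enum 'I_d) => //= j s ->. Qed.

Lemma pd_zero (R : realType) d (j : 'I_d) : pd j (fun _ : 'rV[R]_d => 0) = (fun _ => 0).
Proof.
apply: funext => x; rewrite /pd /=.
have h : forall v, 'D_v (fun _ : 'rV[R]_d => (0:R)) x = 0.
  by move=> v; exact: (derive_cst (0:R)).
by rewrite !h.
Qed.

Lemma pda_zero (R : realType) d (a : mindex d) : pda a (fun _ : 'rV[R]_d => 0) = (fun _ => 0).
Proof.
rewrite /pda; elim: (enum 'I_d) => //= j s ->.
by elim: (a j) => //= k ->; rewrite pd_zero.
Qed.

Lemma iint_zero (R : realType) d (l : seq 'I_d) (x : 'rV[R]_d) :
  iint_from l (fun _ => 0) x = 0.
Proof.
elim: l x => //= j l IH x.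
have -> : (fun t => iint_from l (fun _ => 0) (setcoord x j t)) = fun _ => 0.
  by apply: funext => t; exact: IH.
by rewrite /Rintegral integral0_eq.
Qed.

Lemma Dn1_d0 (R : realType) d (e : d = 0%N) (phi : D0 R d) :
  Dn 1 phi -> sval phi = fun _ => 1.
Proof.
subst d; case: phi => f hf /= [hIm [_ [_ [hint _]]]].
have e0 : enum 'I_0 = [::] by apply: size0nil; rewrite size_enum_ord.
move: hint; rewrite /integral_Rd e0 /= => h1.
apply: funext => x; rewrite (thinmx0 x).
have H1 : complex.Re (f 0) = 1 by exact: h1.
have H2 : complex.Im (f 0) = 0 by exact: (hIm 0).
case E: (f 0) => [a b]; rewrite E /= in H1 H2; subst; reflexivity.
Qed.

Section Main.
Variables (R : realType) (d : nat) (U : set (set (D0 R d))).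
Hypotheses (U_ultra : ultrafilter_on U) (U_free : free_filter U)
  (U_Dn : forall n : nat, U (Dn n.+1)).

Let UT : U setT. Proof. by case: U_ultra. Qed.
Let U0 : ~ U set0. Proof. by case: U_ultra => _ []. Qed.
Let UI {A B} : U A -> U B -> U (A `&` B). Proof. by case: U_ultra => _ [_ [h _]]; exact: h. Qed.
Let US {A B} : A `<=` B -> U A -> U B. Proof. by case: U_ultra => _ [_ [_ [h _]]]; exact: h. Qed.
Let UC A : U A \/ U (~` A). Proof. by case: U_ultra => _ [_ [_ [_ h]]]; exact: h. Qed.

Lemma ae_T (P : D0 R d -> Prop) : (forall phi, P phi) -> ae U P.
Proof. by rewrite /ae => h; apply: US UT => phi _; exact: h. Qed.

Lemma ae_mono (P Q : D0 R d -> Prop) : (forall phi, P phi -> Q phi) -> ae U P -> ae U Q.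
Proof. by move=> h hP; apply: US hP => phi; exact: h. Qed.

Lemma ae_and (P Q : D0 R d -> Prop) : ae U P -> ae U Q -> ae U (fun phi => P phi /\ Q phi).
Proof. by rewrite /ae => hP hQ; apply: US (UI hP hQ) => phi. Qed.

Lemma ae_false : ~ ae U (fun _ => False).
Proof. by rewrite /ae => h; apply: U0; apply: US h => phi. Qed.

Lemma ae_not (P : D0 R d -> Prop) : ~ ae U P -> ae U (fun phi => ~ P phi).
Proof. by rewrite /ae => h; case: (UC [set phi | P phi]) => // hc; apply: US hc => phi. Qed.

Arguments ae_T {P}. Arguments ae_mono {P Q}. Arguments ae_and {P Q}. Arguments ae_not {P}.

Lemma dpos : (0 < d)%N.
Proof.
case: (posnP d) => // e; exfalso.
have hD := U_Dn 0.
case: (pselect (exists phi : D0 R d, Dn 1 phi)) => [[phi0 h0]|hno]; last first.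
  by apply: U0; apply: US hD => phi h; apply: hno; exists phi.
have [B [UB nB]] := U_free phi0.
apply: U0; apply: US (UI hD UB) => psi [h1 h2]; apply: nB.
suff -> : phi0 = psi by [].
move: (@Dn1_d0 R d e _ h0) (@Dn1_d0 R d e _ h1); case: phi0 {h0} => f hf; case: psi {h1 h2} => g hg /= ef eg.
subst f g; congr exist; exact: Prop_irrelevance.
Qed.

Lemma Rphi_pos (n : nat) (phi : D0 R d) : Dn n.+1 phi -> 0 < Rphi phi.
Proof.
case=> [hIm [_ [_ [hint [_ [_ hder]]]]]].
have ge0 : 0 <= Rphi phi.
  rewrite /Rphi; case: asboolP => // [[x hx]].
  case: (pselect (has_sup [set enorm y | y in [set x | sval phi x != 0]])) => [hs|hn].
    apply: le_trans (sup_upper_bound hs _); first exact: (sqrtr_ge0 _ : 0 <= enorm x).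
    by exists x.
  by rewrite sup_out.
rewrite lt_neqAle ge0 andbT; apply/eqP => e0.
have hz : forall x, complex.Re (sval phi x) = 0.
  have hm : mlen (fun _ : 'I_d => 0%N) = 0%N by rewrite /mlen big1.
  move=> x; have := hder (fun _ => 0%N) ltac:(by rewrite hm) x.
  rewrite pda0 -e0 hm add0n expr0n /=.
  have -> : (2 * d == 0)%N = false by apply/negbTE; rewrite muln_eq0 /= -lt0n dpos.
  rewrite invr0 /cnorm => /(le_trans _)/= => h.
  have : Num.sqrt (complex.Re (sval phi x) ^+ 2 + complex.Im (sval phi x) ^+ 2) == 0.
    by rewrite eq_le sqrtr_ge0 andbT; apply: h.
  rewrite sqrtr_eq0 => h2; apply/eqP; rewrite -sqrf_eq0 eq_le sqr_ge0 andbT.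
  apply: le_trans h2; rewrite lerDl; exact: sqr_ge0.
move: hint; rewrite /integral_Rd.
have -> : (fun x => complex.Re (sval phi x)) = fun _ => 0 by apply: funext.
by rewrite iint_zero => /eqP; rewrite eq_sym oner_eq0.
Qed.

Lemma Rphi_ae (n : nat) : ae U (fun phi => 0 < Rphi phi /\ Rphi phi <= (n.+1)%:R^-1).
Proof.
apply: ae_mono (U_Dn n) => phi h; split; first exact: Rphi_pos h.
by case: h => _ [_ []].
Qed.

Lemma comp_le_enorm (v : 'rV[R]_d) j : `|v ord0 j| <= enorm v.
Proof.
rewrite /enorm -sqrtr_sqr ler_sqrt; last by apply: sumr_ge0 => i _; exact: sqr_ge0.
by rewrite (bigD1 j) //= lerDl; apply: sumr_ge0 => i _; exact: sqr_ge0.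
Qed.

Lemma enorm_small (v : 'rV[R]_d) t : 0 < t ->
  (forall j, `|v ord0 j| < t / (d.+1)%:R) -> enorm v < t.
Proof.
move=> t0 h; set s := (d.+1)%:R^-1 : R.
have s0 : 0 < s by rewrite invr_gt0 ltr0n.
have s1 : s * (d%:R + 1) = 1 by rewrite /s -natr1 mulVf // -natr1 pnatr_eq0.
have hs : \sum_(i < d) v ord0 i ^+ 2 <= d%:R * (t * s) ^+ 2.
  have -> : d%:R * (t * s) ^+ 2 = \sum_(i < d) (t * s) ^+ 2.
    by rewrite sumr_const card_ord mulr_natl.
  apply: ler_sum => i _; rewrite -real_normK ?num_real //.
  have hi : `|v ord0 i| < t * s by exact: h.
  have := normr_ge0 (v ord0 i); nra.
rewrite /enorm -[X in _ < X]ger0_norm ?ltW // -sqrtr_sqr ltr_sqrt ?exprn_gt0 //.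
apply: le_lt_trans hs _.
have ds : d%:R * s = 1 - s.
  by rewrite -[in RHS]s1; ring.
have -> : d%:R * (t * s) ^+ 2 = t ^+ 2 * (s * (d%:R * s)) by ring.
rewrite ds -[X in _ < X]mulr1 ltr_pM2l ?exprn_gt0 //; nra.
Qed.

Lemma mu_nbhdK (O : set 'rV[R]_d) : open O -> forall xi, in_mu U O xi ->
  exists K, [/\ compact K, K `<=` O & ae U (fun phi => K (xi phi))].
Proof.
move=> Oo xi [x [dx [Ox [hinf hxi]]]].
have /nbhs_ballP [e e0 eO] : nbhs x O by apply: open_nbhs_nbhs.
have e20 : 0 < e / 2 by rewrite divr_gt0.
exists (closed_ball x (e / 2)); split.
- apply: bounded_closed_compact; last exact: closed_ball_closed.
  rewrite closed_ballE //; exists (`|x| + e / 2); split; first exact: num_real.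
  move=> M hM y /= hy; apply: ltW; apply: le_lt_trans hM.
  have -> : y = x - (x - y) by rewrite opprB addrC subrK.
  apply: le_trans (ler_normB _ _) _; exact: lerD.
- apply: subset_trans eO; apply: closed_ball_subset => //.
  by rewrite ltr_pdivrMr // ltr_pMr // ltr1n.
- set n := Num.trunc ((e / 2)^-1).
  apply: ae_mono (ae_and hxi (hinf n)) => phi [-> hn].
  apply: subset_closed_ball; split => // i j; rewrite (ord1 i) /ball /= !mxE.
  rewrite opprD addrA subrr add0r normrN.
  apply: le_lt_trans (comp_le_enorm _ _) _; apply: lt_le_trans hn _.
  rewrite -[X in _ <= X]invrK lef_pV2 ?posrE ?invr_gt0 ?ltr0n //.
  exact/ltW/truncnS_gt.
Qed.

Lemma mu_of_K (O K : set 'rV[R]_d) (x : D0 R d -> 'rV[R]_d) :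
  compact K -> K `<=` O -> (forall phi, K (x phi)) -> in_mu U O x.
Proof.
move=> cK KO Kx.
have FU : Filter U.
  split; first exact: UT.
    by move=> A B; exact: UI.
  by move=> A B; exact: US.
have PU : ProperFilter U by split.
have [c [Kc clc]] : K `&` cluster (fmap x U) !=set0.
  apply: cK; apply: US UT => phi _; exact: Kx.
have hb : forall e, 0 < e -> ae U (fun phi => ball c e (x phi)).
  move=> e e0; case: (UC [set phi | ball c e (x phi)]) => // hn; exfalso.
  have [y [hy1 hy2]] := clc (~` ball c e) (ball c e) hn (nbhsx_ballx c e e0).
  exact: hy1.
exists c, (fun phi => x phi - c); split; first exact: KO.
split; last by apply: ae_T => phi; rewrite addrC subrK.
move=> n; set t := (n.+1)%:R^-1 : R.
have t0 : 0 < t by rewrite invr_gt0 ltr0n.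
apply: ae_mono (hb (t / (d.+1)%:R) _); last by rewrite divr_gt0 // ltr0n.
move=> phi [_ hphi]; apply: enorm_small => // j.
have := hphi ord0 j; rewrite /ball /= !mxE distrC; exact.
Qed.

Variables (O : set 'rV[R]_d) (O_open : open O).

Lemma mod_Mrho (h : net R d) : moderate U O h -> Mrho_E U O h.
Proof.
move=> hm a xi hxi.
have [K [cK KO aK]] := mu_nbhdK O O_open xi hxi.
have [m [m0 am]] := hm K cK KO a.
exists m; split => //.
apply: ae_mono (ae_and aK am) => phi [Kx hb].
rewrite /up_eval /up_pda; exact: hb.
Qed.

Lemma neg_Nrho (h : net R d) : Defs.negligible U O h -> Nrho_E U O h.
Proof.
move=> hm a xi hxi n n0.
have [K [cK KO aK]] := mu_nbhdK O O_open xi hxi.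
have am := hm K cK KO a n.+1 isT.
apply: ae_mono (ae_and (ae_and aK am) (Rphi_ae 1)) => phi [[Kx hb] [r0 r1]].
rewrite /up_eval /up_pda; apply: le_lt_trans (hb _ Kx) _.
have rn : 0 < Rphi phi ^+ n by exact: exprn_gt0.
have r2 : Rphi phi < 1 by apply: le_lt_trans r1 _; rewrite invf_lt1 ?ltr1n ?ltr0n.
rewrite exprS; nra.
Qed.

Lemma zero_Nrho (h : net R d) : (forall phi x, h phi x = 0) -> Nrho_E U O h.
Proof.
move=> hz a xi hxi n n0.
apply: ae_mono (Rphi_ae 0) => phi [r0 _].
rewrite /up_eval /up_pda.
have -> : h phi = fun _ => 0 by apply: funext => x; exact: hz.
rewrite pda_zero /cnorm /= expr0n /= addr0 sqrtr0.
exact: exprn_gt0.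
Qed.

Lemma Nrho_neg (h : net R d) : Nrho_E U O h -> Defs.negligible U O h.
Proof.
move=> hN K cK KO a p p0.
set Q := fun phi => forall y, K y -> cnorm (pda a (h phi) y) <= Rphi phi ^+ p.
case: (pselect (ae U Q)) => // nQ; exfalso.
have aB := ae_not nQ.
case: (pselect (exists y, K y)) => [[k0 Kk0]|noK]; last first.
  by apply: nQ; apply: ae_T => phi y Ky; exfalso; apply: noK; exists y.
set P := fun phi y => K y /\ Rphi phi ^+ p < cnorm (pda a (h phi) y).
set x := fun phi => xget k0 (P phi).
have Kx : forall phi, K (x phi).
  move=> phi; case: (pselect (exists y, P phi y)) => [ex|nex].
    by case: (xgetPex k0 ex).
  by rewrite /x xgetPN //; move=> y Py; apply: nex; exists y.
have hin := mu_of_K O K x cK KO Kx.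
have := hN a x hin p p0.
move=> aN; apply: ae_false; apply: ae_mono (ae_and aB aN) => phi [nq hlt].
have ex : exists y, P phi y.
  case: (pselect (exists y, P phi y)) => // nex; exfalso; apply: nq => y Ky.
  rewrite leNgt; apply/negP => hy; apply: nex; exists y; split => //.
have [_ hP] := xgetPex k0 ex.
rewrite /up_eval /up_pda in hlt.
have := lt_trans hlt hP; rewrite ltxx; done.
Qed.

Lemma Mrho_mod (h : net R d) : Mrho_E U O h -> moderate U O h.
Proof.
move=> hM K cK KO a.
set Q := fun m phi => forall y, K y -> cnorm (pda a (h phi) y) <= Rphi phi ^- m.
case: (pselect (exists m, (0 < m)%N /\ ae U (Q m))) => // nex; exfalso.
set B := fun (m : nat) phi => exists y, K y /\ Rphi phi ^- m < cnorm (pda a (h phi) y).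
have aB : forall m, (0 < m)%N -> ae U (B m).
  move=> m m0; have nQ : ~ ae U (Q m) by move=> q; apply: nex; exists m.
  apply: ae_mono (ae_not nQ) => phi nq.
  case: (pselect (B m phi)) => // nb; exfalso; apply: nq => y Ky.
  rewrite leNgt; apply/negP => hy; apply: nb; exists y; split => //.
case: (pselect (exists y, K y)) => [[k0 Kk0]|noK]; last first.
  apply: ae_false; apply: ae_mono (aB 1%N isT) => phi [y [Ky _]].
  by apply: noK; exists y.
pose N := fun phi : D0 R d => Num.trunc ((Rphi phi)^-1).
pose Pb := fun phi (k : nat) => (0 < k)%N && `[< B k phi >].
pose kk := fun phi => \max_(k in [pred k : 'I_(N phi).+1 | Pb phi k]) (k : nat).
have kk_spec : forall phi m, (0 < m)%N -> (m <= N phi)%N -> B m phi ->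
    (m <= kk phi)%N /\ B (kk phi) phi.
  move=> phi m m0 mN Bm.
  have Pm : Pb phi m by rewrite /Pb m0 /=; apply/asboolP.
  have mlt : (m < (N phi).+1)%N by [].
  split.
    apply: (@leq_bigmax_cond _ _ (fun k : 'I_(N phi).+1 => (k : nat)) (Ordinal mlt)).
    by rewrite inE.
  have hA : Ordinal mlt \in [pred k : 'I_(N phi).+1 | Pb phi k] by rewrite inE.
  have hc : (0 < #|[pred k : 'I_(N phi).+1 | Pb phi k]|)%N.
    by apply/card_gt0P; exists (Ordinal mlt).
  have [i0 i0A E] := @eq_bigmax_cond _ [pred k : 'I_(N phi).+1 | Pb phi k]
     (fun k : 'I_(N phi).+1 => (k : nat)) hc.
  rewrite /kk E.
  by move: i0A; rewrite inE /Pb => /andP[_ /asboolP].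
pose P := fun phi y => K y /\ Rphi phi ^- (kk phi) < cnorm (pda a (h phi) y).
pose x := fun phi => xget k0 (P phi).
have Kx : forall phi, K (x phi).
  move=> phi; case: (pselect (exists y, P phi y)) => [ex|nex'].
    by case: (xgetPex k0 ex).
  by rewrite /x xgetPN //; move=> y Py; apply: nex'; exists y.
have hin := mu_of_K O K x cK KO Kx.
have [m0 [m0pos aM]] := hM a x hin.
apply: ae_false.
apply: ae_mono (ae_and (ae_and aM (aB m0 m0pos)) (Rphi_ae m0)) => phi [[hle Bm] [r0 r1]].
have mN : (m0 <= N phi)%N.
  rewrite /N truncn_ge_nat; last by rewrite invr_ge0 ltW.
  have h1 : m0%:R <= (m0.+1)%:R :> R by rewrite ler_nat.
  refine (le_trans h1 _).
  by rewrite -[X in X <= _]invrK lef_pV2 ?posrE ?invr_gt0 ?ltr0n.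
have [mk Bk] := kk_spec phi m0 m0pos mN Bm.
have ex : exists y, P phi y by case: Bk => y [Ky hy]; exists y.
have [_ hP] := xgetPex k0 ex.
rewrite /up_eval /up_pda in hle.
have hmon : Rphi phi ^- m0 <= Rphi phi ^- (kk phi).
  rewrite lef_pV2 ?posrE ?exprn_gt0 //.
  apply: ler_wiXn2l => //; first exact: ltW.
  by apply: le_trans r1 _; rewrite invf_le1 ?ler1n ?ltr0n.
have := le_lt_trans (le_trans hle hmon) hP; rewrite ltxx; done.
Qed.

End Main.

Theorem theorem7p12 (R : realType) (d : nat) (U : set (set (D0 R d)))
  (U_ultra : ultrafilter_on U) (U_free : free_filter U)
  (U_good : cplus_good R U) (U_Dn : forall n : nat, U (Dn n.+1))
  (O : set 'rV[R]_d) (O_open : open O) :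
  (* (i) *)
  (forall f : net R d, net_in_E O f ->
     (moderate U O f <-> Mrho_E U O (up f))) /\
  (* (ii) the map  hat f |-> hat <f>  from M/N to M_rho/N_rho ... *)
  (* ... maps M into M_rho *)
  (forall f : net R d, net_in_E O f -> moderate U O f -> Mrho_E U O (up f)) /\
  (* ... is well defined *)
  (forall f g : net R d, net_in_E O f -> net_in_E O g ->
     moderate U O f -> moderate U O g ->
     hat_eq U O f g -> rhohat_eq U O (up f) (up g)) /\
  (* ... is injective *)
  (forall f g : net R d, net_in_E O f -> net_in_E O g ->
     moderate U O f -> moderate U O g ->
     rhohat_eq U O (up f) (up g) -> hat_eq U O f g) /\
  (* ... is surjective onto ^rho E(Omega) *)
  (forall F : net R d, net_in_E O F -> Mrho_E U O F ->
     exists f : net R d, [/\ net_in_E O f, moderate U O f &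
                             rhohat_eq U O (up f) F]) /\
  (* ... and is a homomorphism of differential algebras *)
  (forall f g : net R d, net_in_E O f -> net_in_E O g ->
     moderate U O f -> moderate U O g ->
     [/\ rhohat_eq U O (up (net_add f g)) (up_add (up f) (up g)),
         rhohat_eq U O (up (net_mul f g)) (up_mul (up f) (up g)),
         (forall c : R[i], rhohat_eq U O (up (net_scale c f)) (up_scale c (up f))),
         rhohat_eq U O (up (@net_one R d)) (@up_one R d) &
         (forall j : 'I_d, rhohat_eq U O (up (net_pd j f)) (up_pd j (up f)))]).
Proof.
have M1 := @mod_Mrho R d U U_ultra O O_open.
have M2 := @neg_Nrho R d U U_ultra U_free U_Dn O O_open.
have M3 := @zero_Nrho R d U U_ultra U_free U_Dn O.
have M4 := @Nrho_neg R d U U_ultra O.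
have M5 := @Mrho_mod R d U U_ultra U_free U_Dn O.
split; first by move=> f _; split; [exact: M1 | exact: M5].
split; first by move=> f _; exact: M1.
split; first by move=> f g _ _ _ _; exact: M2.
split; first by move=> f g _ _ _ _; exact: M4.
split.
  move=> F FE FM; exists F; split => //; first exact: M5.
  by apply: M3 => phi x; exact: subrr.
move=> f g _ _ _ _; split; try intros; apply: M3 => phi x; exact: subrr.
Qed.
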